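(* Let $N\ge7$, $D=\frac{N-2}2$, let $1\le L\le N-1$ be an integer and $J=4L$. Let $q_0\in(0,\infty)$ be the unique number with $q_0^{-2D}+(q_0^2+1)^{-D}=1$. For $k\in\{1,\dots,L\}$ set $\iota_{4k-3}=\iota_{4k-2}=+1$, $\iota_{4k-1}=\iota_{4k}=-1$ and $z^*_{4k-3}=\frac12e_1+\frac{q_0}2e_{k+1}$, $z^*_{4k-2}=-\frac12e_1+\frac{q_0}2e_{k+1}$, $z^*_{4k-1}=\frac12e_1-\frac{q_0}2e_{k+1}$, $z^*_{4k}=-\frac12e_1-\frac{q_0}2e_{k+1}$, where $e_1,\dots,e_N$ is the standard basis of $\mathbb{R}^N$. Then this configuration is degenerate and $A^*$ has at least $L$ linearly independent kernel elements in $[0,\infty)^J$.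
   Context: $A^*_{ij}=\mathbf 1_{i\ne j}\kappa_0\kappa_\infty\frac{\iota_i\iota_j}{|z_i^*-z_j^*|^{N-2}}$ with fixed positive constants $\kappa_0,\kappa_\infty$. A configuration is degenerate if $A^*$ has a nonzero kernel element in $[0,\infty)^J$. *)

(* Defs.v *)
From HB Require Import structures.
From mathcomp Require Import all_boot all_order all_algebra.
From mathcomp Require Import all_classical all_reals all_analysis.
Set Implicit Arguments. Unset Strict Implicit. Unset Printing Implicit Defensive.
Import Order.TTheory GRing.Theory Num.Theory.
Local Open Scope ring_scope.

Definition enorm {R : realType} {N : nat} (x : 'rV[R]_N) : R :=
  Num.sqrt (\sum_(j < N) x 0 j ^+ 2).

(* Indices are 0-based: paper index 4k-3+r (k = 1..L, r = 0..3) is i = 4(k-1)+r,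
   so k-1 = i %/ 4 and r = i %% 4. *)
Definition iota_sign {R : realType} (i : nat) : R :=
  if (i %% 4 < 2)%N then 1 else -1.

(* z*_i = s1 * (1/2) e_1 + s2 * (q0/2) e_{k+1}; in 0-based coordinates e_1 is
   coordinate 0 and e_{k+1} is coordinate k = i %/ 4 + 1. *)
Definition zstar {R : realType} (N : nat) (q0 : R) (i : nat) : 'rV[R]_N :=
  \row_(j < N)
    ((if (nat_of_ord j == 0)%N then (if odd (i %% 4) then - (1/2) else 1/2) else 0) +
     (if (nat_of_ord j == i %/ 4 + 1)%N then (if (i %% 4 < 2)%N then q0 / 2 else - (q0 / 2))
      else 0)).

Definition Astar {R : realType} (N J : nat) (kappa0 kappainf : R)
  (iota : nat -> R) (z : nat -> 'rV[R]_N) : 'M[R]_J :=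
  \matrix_(i < J, j < J)
    (if i != j then
       kappa0 * kappainf * (iota i * iota j) / (enorm (z i - z j)) ^+ (N - 2)
     else 0).

Definition degenerate {R : realType} {J : nat} (A : 'M[R]_J) : Prop :=
  exists v : 'cV[R]_J, v != 0 /\ (forall i, 0 <= v i 0) /\ A *m v = 0.

(* Main.v *)
Require Import Defs.
From HB Require Import structures.
From mathcomp Require Import all_boot all_order all_algebra.
From mathcomp Require Import all_classical all_reals all_analysis.
From mathcomp Require Import zify ring lra.
Import Order.TTheory GRing.Theory Num.Theory.
Local Open Scope ring_scope.

Section Aux.
Variable R : realType.

Lemma sum_ind (n p : nat) (x : R) : (p < n)%N ->
  \sum_(c < n) (if (c : nat) == p then x else 0) = x.
Proof.
move=> hp; rewrite (bigD1 (Ordinal hp)) //= eqxx big1 ?addr0 // => c hc.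
case: eqP => // e; move: hc; suff -> : c = Ordinal hp by rewrite eqxx.
by apply: val_inj.
Qed.

Definition aa (r : nat) : R := if odd r then - (1/2) else 1/2.
Definition bb (q0 : R) (r : nat) : R := if (r < 2)%N then q0 / 2 else - (q0 / 2).

Lemma zE N (q0 : R) (i : nat) (c : 'I_N) : (zstar N q0 i) 0 c =
  (if (c : nat) == 0%N then aa (i %% 4)%N else 0) +
  (if (c : nat) == (i %/ 4)%N.+1 then bb q0 (i %% 4)%N else 0).
Proof. by rewrite mxE addn1. Qed.

Lemma subE N (A B : 'rV[R]_N) c : (A - B) 0 c = A 0 c - B 0 c.
Proof. by rewrite !mxE. Qed.

Lemma pw (c p p' : nat) (ai al bi bl : R) : p.+1 != 0%N -> p'.+1 != 0%N ->
  ((if c == 0%N then ai else 0) + (if c == p.+1 then bi else 0) -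
   ((if c == 0%N then al else 0) + (if c == p'.+1 then bl else 0))) ^+ 2 =
   (if c == 0%N then (ai - al) ^+ 2 else 0)
 + (if c == p.+1 then bi ^+ 2 else 0)
 + (if c == p'.+1 then bl ^+ 2 else 0)
 - (if c == p.+1 then (if p == p' then 2 * bi * bl else 0) else 0).
Proof.
move=> h1 h2.
case: (eqVneq c 0%N) => [e0|n0].
  subst c; rewrite eq_sym (negbTE h1) eq_sym (negbTE h2); ring.
case: (eqVneq c p.+1) => [e1|n1]; case: (eqVneq c p'.+1) => [e2|n2].
- have e : p = p' by rewrite e1 in e2; case: e2.
  by rewrite e eqxx; ring.
- have e : p != p' by apply/eqP => e; by rewrite -e e1 eqxx in n2.
  rewrite (negbTE e); ring.
- ring.
- ring.
Qed.

Lemma zdiff_sq N (q0 : R) (i l : nat) : ((i %/ 4)%N.+1 < N)%N -> ((l %/ 4)%N.+1 < N)%N ->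
  \sum_(c < N) (zstar N q0 i - zstar N q0 l) 0 c ^+ 2 =
  (aa (i %% 4)%N - aa (l %% 4)%N) ^+ 2 + bb q0 (i %% 4)%N ^+ 2 + bb q0 (l %% 4)%N ^+ 2
   - (if (i %/ 4 == l %/ 4)%N then 2 * bb q0 (i %% 4)%N * bb q0 (l %% 4)%N else 0).
Proof.
move=> hi hl.
rewrite (eq_bigr _ (fun c _ => (erefl : _ = _ ^+ 2))).
under eq_bigr do rewrite subE !zE pw //.
have h0 : (0 < N)%N by apply: leq_ltn_trans hi.
by rewrite sumrB !big_split /= !sum_ind.
Qed.

Definition io (r : nat) : R := if (r < 2)%N then 1 else -1.

Definition gA N (c q0 : R) (i l : nat) : R :=
  if i != l then c * (iota_sign i * iota_sign l) /
     enorm (zstar N q0 i - zstar N q0 l) ^+ (N - 2) else 0.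

Lemma gA_blk N (c q0 : R) (i l : nat) : ((i %/ 4)%N.+1 < N)%N -> ((l %/ 4)%N.+1 < N)%N ->
  gA N c q0 i l = if i != l then c * (io (i %% 4)%N * io (l %% 4)%N) /
   Num.sqrt ((aa (i %% 4)%N - aa (l %% 4)%N) ^+ 2 + bb q0 (i %% 4)%N ^+ 2 + bb q0 (l %% 4)%N ^+ 2
   - (if (i %/ 4 == l %/ 4)%N then 2 * bb q0 (i %% 4)%N * bb q0 (l %% 4)%N else 0)) ^+ (N - 2)
   else 0.
Proof. by move=> hi hl; rewrite /gA /enorm zdiff_sq. Qed.

Lemma Ssame (q0 : R) (r0 r : nat) : (r0 < 4)%N -> (r < 4)%N ->
  (aa r0 - aa r) ^+ 2 + bb q0 r0 ^+ 2 + bb q0 r ^+ 2 - 2 * bb q0 r0 * bb q0 r =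
  (if odd r0 == odd r then 0 else 1) + (if (r0 < 2)%N == (r < 2)%N then 0 else q0 ^+ 2).
Proof.
by case: r0 => [|[|[|[|]]]] //; case: r => [|[|[|[|]]]] // _ _; rewrite /aa /bb /=; field.
Qed.

Lemma hconv (N : nat) (q0 : R) : 0 < q0 ->
  q0 `^ (- (2 * (((N - 2)%:R : R) / 2))) +
    (q0 ^+ 2 + 1) `^ (- (((N - 2)%:R : R) / 2)) = 1 ->
  (q0 ^+ (N - 2))^-1 + (Num.sqrt (1 + q0 ^+ 2) ^+ (N - 2))^-1 = 1.
Proof.
move=> q0p; rewrite !powRN.
have -> : 2 * (((N - 2)%:R : R) / 2) = (N - 2)%:R by field.
rewrite mulrC powRrM powR12_sqrt; last by rewrite addr_ge0 // sqr_ge0.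
rewrite (powR_mulrn _ (sqrtr_ge0 _)) (powR_mulrn _ (ltW q0p)); by rewrite (addrC 1).
Qed.

Lemma blk_same N (c q0 : R) (j r0 : nat) : 0 < q0 -> (j.+1 < N)%N -> (r0 < 4)%N ->
  (q0 ^+ (N - 2))^-1 + (Num.sqrt (1 + q0 ^+ 2) ^+ (N - 2))^-1 = 1 ->
  gA N c q0 (4 * j + r0) (4 * j + 0) + gA N c q0 (4 * j + r0) (4 * j + 1) +
  gA N c q0 (4 * j + r0) (4 * j + 2) + gA N c q0 (4 * j + r0) (4 * j + 3) = 0.
Proof.
move=> q0p hj hr H.
have d4 : forall r, (r < 4)%N -> ((4 * j + r) %/ 4 = j)%N by move=> r hr'; lia.
have m4 : forall r, (r < 4)%N -> ((4 * j + r) %% 4 = r)%N by move=> r hr'; lia.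
have Hx : (q0 ^+ (N - 2))^-1 = 1 - (Num.sqrt (1 + q0 ^+ 2) ^+ (N - 2))^-1 by apply: (addIr (Num.sqrt (1 + q0 ^+ 2) ^+ (N - 2))^-1); rewrite subrK H.
rewrite !gA_blk ?d4 // !m4 // eqxx !eqn_add2l !Ssame //.
case: r0 hr => [|[|[|[|]]]] // _ /=; rewrite /io /= ?addr0 ?add0r sqrtr1 sqrtr_sqr gtr0_norm //
  expr1n invr1 Hx; ring.
Qed.

Lemma blk_diff N (c q0 : R) (i j : nat) : ((i %/ 4)%N.+1 < N)%N -> (j.+1 < N)%N ->
  (i %/ 4 != j)%N ->
  gA N c q0 i (4 * j + 0) + gA N c q0 i (4 * j + 1) +
  gA N c q0 i (4 * j + 2) + gA N c q0 i (4 * j + 3) = 0.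
Proof.
move=> hi hj hij.
have d4 : forall r, (r < 4)%N -> ((4 * j + r) %/ 4 = j)%N by move=> r hr'; lia.
have m4 : forall r, (r < 4)%N -> ((4 * j + r) %% 4 = r)%N by move=> r hr'; lia.
have ne : forall r, (r < 4)%N -> (i != 4 * j + r)%N.
  by move=> r hr; apply/eqP => e; rewrite e d4 ?eqxx in hij.
rewrite !gA_blk ?d4 // !m4 // !ne // (negbTE hij) /aa /bb /io /= sqrrN !subr0.
ring.
Qed.

Lemma AE N L (k0 ki q0 : R) (i l : 'I_(4 * L)) :
  Astar (4 * L) k0 ki (@iota_sign R) (zstar N q0) i l = gA N (k0 * ki) q0 i l.
Proof. by rewrite mxE /gA. Qed.

Lemma rowsum N L (c q0 : R) (i : 'I_(4 * L)) (j : nat) : 0 < q0 ->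
  (L <= N - 1)%N -> (j < L)%N -> 
  (q0 ^+ (N - 2))^-1 + (Num.sqrt (1 + q0 ^+ 2) ^+ (N - 2))^-1 = 1 ->
  \sum_(l < 4 * L) gA N c q0 i l * (if (l %/ 4 == j)%N then 1 else 0) = 0.
Proof.
move=> q0p hLN hj H.
have hi := ltn_ord i.
rewrite -(big_mkord xpredT (fun l => gA N c q0 i l * (if (l %/ 4 == j)%N then 1 else 0))).
rewrite (@big_cat_nat _ _ _ (4 * j) 0 (4 * L)) /=; [|lia|lia].
rewrite (@big_cat_nat _ _ _ (4 * j + 4) (4 * j) (4 * L)) /=; [|lia|lia].
rewrite [X in X + _]big1_seq ?add0r; last first.
  move=> l /andP[_]; rewrite mem_index_iota => hl.
  have hne : (l %/ 4 == j)%N = false by apply/negbTE/eqP; lia.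
  by rewrite hne mulr0.
rewrite [X in _ + X]big1_seq ?addr0; last first.
  move=> l /andP[_]; rewrite mem_index_iota => hl.
  have hne : (l %/ 4 == j)%N = false by apply/negbTE/eqP; lia.
  by rewrite hne mulr0.
do 4!(rewrite big_ltn; last by lia).
rewrite big_geq; last by lia.
have d4 : forall r, (r < 4)%N -> ((4 * j + r) %/ 4 = j)%N by move=> r hr'; lia.
have -> : (4 * j = 4 * j + 0)%N by rewrite addn0.
have -> : ((4 * j + 0).+1 = 4 * j + 1)%N by lia.
have -> : ((4 * j + 1).+1 = 4 * j + 2)%N by lia.
have -> : ((4 * j + 2).+1 = 4 * j + 3)%N by lia.
rewrite !d4 // eqxx !mulr1 addr0 !addrA.
have hi4 : ((i %/ 4).+1 < N)%N by lia.
have hj4 : (j.+1 < N)%N by lia.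
case: (eqVneq (i %/ 4)%N j) => [e|ne]; last exact: blk_diff.
have -> : nat_of_ord i = (4 * j + i %% 4)%N by rewrite -e; lia.
apply: blk_same => //; lia.
Qed.

End Aux.

Theorem lemma4p10 (R : realType) (N L : nat) (kappa0 kappainf q0 : R) :
  (7 <= N)%N -> (1 <= L)%N -> (L <= N - 1)%N ->
  0 < kappa0 -> 0 < kappainf ->
  0 < q0 ->
  q0 `^ (- (2 * (((N - 2)%:R : R) / 2))) +
    (q0 ^+ 2 + 1) `^ (- (((N - 2)%:R : R) / 2)) = 1 ->
  let A := Astar (4 * L) kappa0 kappainf (@iota_sign R) (zstar N q0) in
  degenerate A /\
  exists V : 'M[R]_(4 * L, L),
    \rank V = L /\ (forall i j, 0 <= V i j) /\ A *m V = 0.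
Proof.
move=> hN hL1 hLN k0p kip q0p H A.
have H' := @hconv R N q0 q0p H.
have key : forall (i : 'I_(4 * L)) (j : nat), (j < L)%N ->
    \sum_(l < 4 * L) A i l * (if (l %/ 4 == j)%N then 1 else 0) = 0.
  move=> i j hj; rewrite /A; under eq_bigr do rewrite AE.
  exact: rowsum.
pose V : 'M[R]_(4 * L, L) := \matrix_(i < 4 * L, j < L) (if (i %/ 4 == j)%N then 1 else 0).
have AV : A *m V = 0.
  apply/matrixP => i j; rewrite mxE [RHS]mxE; under eq_bigr do rewrite [V _ _]mxE.
  exact: key.
split.
  exists (\col_(i < 4 * L) (if (i %/ 4 == 0)%N then 1 else 0)); split; last split.
  - have h0 : (0 < 4 * L)%N by lia.
    apply/eqP => /matrixP /(_ (Ordinal h0) 0); rewrite !mxE /=.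
    by move/eqP; rewrite oner_eq0.
  - by move=> i; rewrite mxE; case: ifP.
  - apply/matrixP => i k; rewrite mxE [RHS]mxE; under eq_bigr do rewrite [X in _ * X]mxE.
    exact: key.
exists V; split; last split; last exact: AV.
  pose W : 'M[R]_(L, 4 * L) := \matrix_(j < L, i < 4 * L) (if ((i : nat) == 4 * j)%N then 1 else 0).
  have WV : W *m V = 1%:M.
    apply/matrixP => j j'; rewrite !mxE.
    under eq_bigr => i _ do rewrite !mxE.
    rewrite (eq_bigr (fun i : 'I_(4 * L) => if ((i : nat) == 4 * j)%N then
        (if ((4 * j) %/ 4 == j')%N then 1 else 0) else 0)); last first.
      by move=> i _; case: eqP => [->|_]; rewrite ?mul1r ?mul0r.
    rewrite sum_ind; last by have := ltn_ord j; lia.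
    have -> : ((4 * j) %/ 4 = j)%N by lia.
    by case: eqP => [/val_inj ->|ne]; rewrite ?eqxx //; case: eqP => // e; case: ne; rewrite e.
  apply/eqP; rewrite eqn_leq rank_leq_col /=.
  by rewrite -{1}(mxrank1 R L) -WV mxrankM_maxr.
by move=> i j; rewrite mxE; case: ifP.
Qed.
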